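(* Let $\mathbf{Q}^\star,\mathbf{Q},\mathbf{Q}_r,\mathbf{H}$ be as in the context, let $\lambda_j^\star$ be the $j$-th eigenvalue of $\mathbf{Q}^\star$, and define $\delta^\star=\min\{\min_{j\in[r-1]}|\lambda_j^\star-\lambda_{j+1}^\star|,\ \lambda_r^\star\}$. If $\|\mathbf{H}\|_2\le\delta^\star/2$, then $$\|\mathbf{Q}^\star-\mathbf{Q}_r\|_2\le O\!\left(\lambda_{r+1}^\star+\frac{\lambda_1^\star}{\delta^\star}\|\mathbf{H}\|_2\right).$$
   Context: $\mathbf{Q}^\star\in\mathbb{C}^{n\times n}$ is Hermitian positive semi-definite of rank $r^\star$, eigenvalues $\lambda_1^\star\ge\lambda_2^\star\ge\dots\ge 0$ (zero beyond the rank). $\mathbf{H}\in\mathbb{C}^{n\times n}$ is arbitrary (not necessarily Hermitian), $\mathbf{Q}=\mathbf{Q}^\star+\mathbf{H}$, and $\mathbf{Q}_r=\mathbf{V}_r\boldsymbol{\Sigma}_r\mathbf{V}_r^\dagger$ with $\boldsymbol{\Sigma}_r$ the diagonal matrix of the top-$r$ singular values of $\mathbf{Q}$ and $\mathbf{V}_r$ the corresponding left singular vectors. $\|\cdot\|_2$ is the spectral norm; $O(\cdot)$ hides an absolute constant. *)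

(* Defs.v *)
From HB Require Import structures.
From mathcomp Require Import all_boot all_order all_algebra.
From mathcomp Require Import complex.
From mathcomp Require Import boolp classical_sets reals.

Set Implicit Arguments.
Unset Strict Implicit.
Unset Printing Implicit Defensive.

Import Order.TTheory GRing.Theory Num.Theory.
Local Open Scope ring_scope.
Local Open Scope classical_set_scope.

Definition adj {R : realType} m n (A : 'M[R[i]]_(m, n)) : 'M[R[i]]_(n, m) :=
  (map_mx (@Num.conj R[i]) A)^T.

Definition unitary {R : realType} n (A : 'M[R[i]]_n) : Prop :=
  A *m adj A = 1%:M.

Definition vnorm {R : realType} n (x : 'cV[R[i]]_n) : R :=
  Num.sqrt (\sum_(i < n) (ComplexField.Normc.normc (x i ord0)) ^+ 2).

Definition specnorm {R : realType} n (A : 'M[R[i]]_n) : R :=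
  sup [set vnorm (A *m x) | x in [set x : 'cV[R[i]]_n | vnorm x = 1]].

Definition rdiag {R : realType} n (d : nat -> R) : 'M[R[i]]_n :=
  diag_mx (\row_(j < n) (d j)%:C%C).

Definition sorted_spectrum {R : realType} n (d : nat -> R) : Prop :=
  (forall j k, (j <= k)%N -> (k < n)%N -> d k <= d j) /\
  (forall j, (j < n)%N -> 0 <= d j) /\
  (forall j, (n <= j)%N -> d j = 0).

(* (lam, U) is a spectral decomposition of the Hermitian PSD matrix Qs:
   Qs = U diag(lam) U^dagger with U unitary, lam sorted nonincreasing, >= 0.
   lam j (0-based) is the (j+1)-th eigenvalue of Qs; lam j = 0 for j >= n. *)
Definition psd_eigendecomp {R : realType} n (Qs : 'M[R[i]]_n)
    (lam : nat -> R) (U : 'M[R[i]]_n) : Prop :=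
  unitary U /\ sorted_spectrum n lam /\ Qs = U *m rdiag n lam *m adj U.

Definition svd {R : realType} n (Q : 'M[R[i]]_n)
    (U : 'M[R[i]]_n) (s : nat -> R) (W : 'M[R[i]]_n) : Prop :=
  unitary U /\ unitary W /\ sorted_spectrum n s /\ Q = U *m rdiag n s *m adj W.

(* Q_r = V_r Sigma_r V_r^dagger where V_r are the first r columns of U
   (left singular vectors) and Sigma_r the top r singular values. *)
Definition trunc_r {R : realType} n (r : nat) (U : 'M[R[i]]_n) (s : nat -> R)
  : 'M[R[i]]_n :=
  U *m rdiag n (fun j => if (j < r)%N then s j else 0) *m adj U.

(* delta* = min( min_{j in [r-1]} |lam_j - lam_{j+1}|, lam_r ) (1-based);
   with 0-based lam: min over j < r-1 of |lam j - lam (j+1)| and lam (r-1). *)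
Definition delta_star {R : realType} (lam : nat -> R) (r : nat) : R :=
  \big[Num.min/lam r.-1]_(j < r.-1) `|lam j - lam j.+1|.

(* Main.v *)
Require Import Defs.
From HB Require Import structures.
From mathcomp Require Import all_boot all_order all_algebra.
From mathcomp Require Import complex.
From mathcomp Require Import boolp classical_sets reals.
From mathcomp Require Import ring lra zify.
Import Order.TTheory GRing.Theory Num.Theory.
Set Implicit Arguments.
Unset Strict Implicit.
Unset Printing Implicit Defensive.
Local Open Scope ring_scope.

Section Basics.
Variable R : realType.
Local Notation C := R[i].

Definition nc (z : C) : R := ComplexField.Normc.normc z.

Lemma ncE z : (nc z)%:C%C = `|z|.
Proof. by case: z. Qed.

Lemma nc_ge0 z : 0 <= nc z.
Proof. by rewrite -ler0c ncE. Qed.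

Lemma ncM a b : nc (a * b) = nc a * nc b.
Proof. exact: ComplexField.Normc.normcM. Qed.

Lemma ncD a b : nc (a + b) <= nc a + nc b.
Proof. exact: le_normcD. Qed.

Lemma nc_conj z : nc (Num.conj z) = nc z.
Proof. by apply: complexI; rewrite !ncE norm_conjC. Qed.

Lemma nc_real (x : R) : nc (x%:C%C) = `|x|.
Proof. by rewrite /nc /= expr0n /= addr0 sqrtr_sqr. Qed.

Lemma nc2 z : ((nc z) ^+ 2)%:C%C = Num.conj z * z.
Proof. by rewrite rmorphXn /= ncE normCKC. Qed.

Lemma nc_eq0 z : nc z = 0 -> z = 0.
Proof. exact: ComplexField.Normc.eq0_normc. Qed.

Lemma nc0 : nc 0 = 0.
Proof. exact: ComplexField.Normc.normc0. Qed.

Lemma ncN z : nc (- z) = nc z.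
Proof. exact: normcN. Qed.

Lemma le_nc (x : R) z : x%:C%C = z -> x <= nc z.
Proof. by move=> <-; rewrite nc_real ler_norm. Qed.

Lemma nc_sum (I : finType) (F : I -> C) : nc (\sum_i F i) <= \sum_i nc (F i).
Proof.
elim/big_rec2: _ => [|i y z _ Hz]; first by rewrite nc0.
by rewrite (le_trans (ncD _ _)) // lerD2l.
Qed.

Lemma cs_real (I : finType) (a b : I -> R) :
  (\sum_i a i * b i) ^+ 2 <= (\sum_i a i ^+ 2) * (\sum_i b i ^+ 2).
Proof.
have H : 0 <= \sum_i \sum_j (a i * b j - a j * b i) ^+ 2.
  by apply: sumr_ge0 => i _; apply: sumr_ge0 => j _; apply: sqr_ge0.
have E : \sum_i \sum_j (a i * b j - a j * b i) ^+ 2 =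
   2 * ((\sum_i a i ^+ 2) * (\sum_i b i ^+ 2)) - 2 * (\sum_i a i * b i) ^+ 2.
  have P1 : (\sum_i a i ^+ 2) * (\sum_i b i ^+ 2) =
      \sum_i \sum_j (a i ^+ 2 * b j ^+ 2) by rewrite big_distrlr.
  have P2 : (\sum_i a i ^+ 2) * (\sum_i b i ^+ 2) =
      \sum_i \sum_j (a j ^+ 2 * b i ^+ 2).
    rewrite mulrC big_distrlr; apply: eq_bigr => i _; apply: eq_bigr => j _ /=. ring.
  have P3 : (\sum_i a i * b i) ^+ 2 =
      \sum_i \sum_j ((a i * b i) * (a j * b j)) by rewrite expr2 big_distrlr.
  have E1 : \sum_i \sum_j (a i * b j - a j * b i) ^+ 2 =
     \sum_i (\sum_j (a i ^+ 2 * b j ^+ 2) + \sum_j (a j ^+ 2 * b i ^+ 2)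
     - 2 * \sum_j ((a i * b i) * (a j * b j))).
    apply: eq_bigr => i _; rewrite mulr_sumr -big_split -sumrB /=.
    apply: eq_bigr => j _. ring.
  rewrite E1 sumrB big_split -mulr_sumr /= -P1 -P2 -P3; ring.
by move: H; rewrite E subr_ge0 ler_pM2l.
Qed.

Lemma cs_nc (I : finType) (a b : I -> C) :
  nc (\sum_i a i * b i) ^+ 2 <= (\sum_i nc (a i) ^+ 2) * (\sum_i nc (b i) ^+ 2).
Proof.
have := cs_real (fun i => nc (a i)) (fun i => nc (b i)); apply: le_trans.
rewrite ler_sqr ?nn_int ?nnegrE ?nc_ge0 ?sumr_ge0 // => [|i _]; last first.
  by rewrite mulr_ge0 ?nc_ge0.
by rewrite (le_trans (nc_sum _)) //; apply: ler_sum => i _; rewrite ncM.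
Qed.


Definition ns m (x : 'cV[C]_m) : R := \sum_i nc (x i ord0) ^+ 2.

Lemma vnormE m (x : 'cV[C]_m) : vnorm x = Num.sqrt (ns x).
Proof. by []. Qed.

Lemma ns_ge0 m (x : 'cV[C]_m) : 0 <= ns x.
Proof. by apply: sumr_ge0 => i _; apply: sqr_ge0. Qed.

Lemma nsC m (x : 'cV[C]_m) : (ns x)%:C%C = (adj x *m x) ord0 ord0.
Proof.
rewrite /ns rmorph_sum !mxE; apply: eq_bigr => i _.
by have := nc2 (x i ord0); rewrite !mxE => <-.
Qed.

Lemma adj_mul m n p (A : 'M[C]_(m, n)) (B : 'M[C]_(n, p)) :
  adj (A *m B) = adj B *m adj A.
Proof. by rewrite /adj map_mxM trmx_mul. Qed.

Lemma adjK m n (A : 'M[C]_(m, n)) : adj (adj A) = A.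
Proof. by apply/matrixP => i j; rewrite !mxE conjCK. Qed.

Lemma adjD m n (A B : 'M[C]_(m, n)) : adj (A + B) = adj A + adj B.
Proof. by apply/matrixP => i j; rewrite !mxE rmorphD. Qed.

Lemma adjN m n (A : 'M[C]_(m, n)) : adj (- A) = - adj A.
Proof. by apply/matrixP => i j; rewrite !mxE rmorphN. Qed.

Lemma conj_realC (x : R) : Num.conj (x%:C%C) = x%:C%C.
Proof. by apply: conj_Creal; rewrite complex_real. Qed.

Lemma adj_rdiag n (d : nat -> R) : adj (rdiag n d) = rdiag n d.
Proof.
apply/matrixP => i j; rewrite !mxE eq_sym.
by case: eqP => [->|_]; rewrite /= ?mulr1n ?mulr0n ?rmorph0 // conj_realC.
Qed.

Lemma unitary_sym n (U : 'M[C]_n) : unitary U -> adj U *m U = 1%:M.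
Proof. exact: mulmx1C. Qed.

Lemma ns_mulU n m (U : 'M[C]_(n, m)) (x : 'cV[C]_m) :
  adj U *m U = 1%:M -> ns (U *m x) = ns x.
Proof.
move=> HU; apply: complexI; rewrite !nsC adj_mul -mulmxA (mulmxA (adj U)) HU.
by rewrite mul1mx.
Qed.

Lemma ns_add2 m (x y : 'cV[C]_m) : ns (x + y) <= 2 * ns x + 2 * ns y.
Proof.
rewrite /ns !mulr_sumr -big_split; apply: ler_sum => i _ /=; rewrite mxE.
have h := ncD (x i ord0) (y i ord0); have h0 := nc_ge0 (x i ord0 + y i ord0).
have h1 := nc_ge0 (x i ord0); have h2 := nc_ge0 (y i ord0).
move: h h0 h1 h2; set a := nc _; set b := nc _; set c := nc _ => h h0 h1 h2.
have hs : a ^+ 2 <= (b + c) ^+ 2 by rewrite ler_sqr ?nnegrE ?addr_ge0.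
have := sqr_ge0 (b - c); nra.
Qed.

Lemma ns_add3 m (x y z : 'cV[C]_m) :
  ns (x + y + z) <= 3 * (ns x + ns y + ns z).
Proof.
rewrite /ns -!big_split mulr_sumr; apply: ler_sum => i _ /=; rewrite !mxE.
have h := ncD (x i ord0 + y i ord0) (z i ord0).
have h' := ncD (x i ord0) (y i ord0).
have h0 := nc_ge0 (x i ord0 + y i ord0 + z i ord0).
have h1 := nc_ge0 (x i ord0); have h2 := nc_ge0 (y i ord0).
have h3 := nc_ge0 (z i ord0).
move: h h' h0 h1 h2 h3; set a := nc (_ + _ + _); set b := nc (_ + _);
  set c := nc (z _ _); set d := nc (x _ _); set e := nc (y _ _) => h h' h0 h1 h2 h3.
have hs : a ^+ 2 <= (d + e + c) ^+ 2.
  by rewrite ler_sqr ?nnegrE ?addr_ge0 // (le_trans h) // lerD2r.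
have := sqr_ge0 (d - e); have := sqr_ge0 (d - c); have := sqr_ge0 (e - c); nra.
Qed.

Lemma ns_scale m (c : R) (x : 'cV[C]_m) : ns (c%:C%C *: x) = c ^+ 2 * ns x.
Proof.
rewrite /ns mulr_sumr; apply: eq_bigr => i _; rewrite !mxE ncM nc_real.
by rewrite exprMn real_normK ?num_real.
Qed.

Lemma ns_eq0 m (x : 'cV[C]_m) : ns x = 0 -> x = 0.
Proof.
move=> /eqP; rewrite psumr_eq0 => [/allP H|i _]; last exact: sqr_ge0.
apply/matrixP => i j; rewrite ord1 mxE; apply: nc_eq0.
by have := H i (mem_index_enum _); rewrite /= sqrf_eq0 => /eqP.
Qed.

Lemma ns0 m : ns (0 : 'cV[C]_m) = 0.
Proof. by rewrite /ns big1 // => i _; rewrite mxE nc0 expr0n. Qed.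

Definition frob m n (M : 'M[C]_(m, n)) : R := \sum_i \sum_j nc (M i j) ^+ 2.

Lemma ns_frob m n (M : 'M[C]_(m, n)) (x : 'cV[C]_n) : ns (M *m x) <= frob M * ns x.
Proof.
rewrite /ns /frob mulr_suml; apply: ler_sum => i _; rewrite mxE.
exact: cs_nc.
Qed.

Lemma ip_bound m (y z : 'cV[C]_m) : nc ((adj y *m z) ord0 ord0) ^+ 2 <= ns y * ns z.
Proof.
have E : \sum_j nc (adj y ord0 j) ^+ 2 = \sum_j nc (y j ord0) ^+ 2.
  by apply: eq_bigr => j _; rewrite !mxE nc_conj.
rewrite mxE /ns -E; exact: (cs_nc (fun j => adj y ord0 j) (fun j => z j ord0)).
Qed.

Definition opb n (M : 'M[C]_n) (b : R) := forall x : 'cV_n, ns (M *m x) <= b * ns x.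

Lemma opb_adj n (M : 'M[C]_n) b : 0 <= b -> opb M b -> opb (adj M) b.
Proof.
move=> b0 HM x; set z := adj M *m x.
have h1 : (ns z)%:C%C = (adj x *m (M *m z)) ord0 ord0.
  by rewrite nsC /z adj_mul adjK !mulmxA.
have h2 := le_nc h1.
have h3 := ip_bound x (M *m z).
have h4 := HM z.
have p0 := ns_ge0 z; have q0 := ns_ge0 x; have n0 := nc_ge0 ((adj x *m (M *m z)) ord0 ord0).
have h5 : ns z ^+ 2 <= ns x * (b * ns z).
  apply: le_trans (le_trans _ h3) _; first by rewrite ler_sqr ?nnegrE.
  by rewrite ler_wpM2l.
have [->|zp] := eqVneq (ns z) 0; first by rewrite mulr_ge0.
have zp' : 0 < ns z by rewrite lt0r zp.
by move: h5; rewrite expr2 mulrCA mulrA ler_pM2r // mulrC.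
Qed.


Lemma unit_ns m (x : 'cV[C]_m) : (vnorm x = 1) <-> (ns x = 1).
Proof.
split => [h|h]; last by rewrite vnormE h sqrtr1.
by rewrite -(sqr_sqrtr (ns_ge0 x)) -vnormE h expr1n.
Qed.

Lemma frob_ge0 m n (M : 'M[C]_(m, n)) : 0 <= frob M.
Proof. by do 2!(apply: sumr_ge0 => ? _); apply: sqr_ge0. Qed.

Lemma specnorm_hub n (M : 'M[C]_n) :
  has_ubound [set vnorm (M *m x) | x in [set x : 'cV[C]_n | vnorm x = 1]].
Proof.
exists (Num.sqrt (frob M)) => _ [x /= hx <-].
rewrite vnormE ler_sqrt ?frob_ge0 //.
by have := ns_frob M x; rewrite (proj1 (unit_ns x) hx) mulr1.
Qed.

Lemma specnorm_ub n (M : 'M[C]_n) x : ns x = 1 -> vnorm (M *m x) <= specnorm M.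
Proof.
by move=> hx; apply: (ub_le_sup (specnorm_hub M)); exists x => //=; apply/unit_ns.
Qed.

Lemma specnorm_opb n (M : 'M[C]_n) : opb M (specnorm M ^+ 2).
Proof.
move=> x; have [h|nz] := eqVneq (ns x) 0.
  by rewrite (ns_eq0 h) mulmx0 ns0 mulr0.
set c := Num.sqrt (ns x).
have c0 : 0 < c by rewrite sqrtr_gt0 lt0r nz ns_ge0.
have cc : c ^+ 2 = ns x by rewrite sqr_sqrtr ?ns_ge0.
set y := (c^-1)%:C%C *: x.
have hy : ns y = 1 by rewrite ns_scale exprVn cc mulVf.
have hxy : x = c%:C%C *: y.
  by rewrite /y scalerA -rmorphM divff ?gt_eqF // scale1r.
have h1 := specnorm_ub M hy.
have h2 : ns (M *m y) <= specnorm M ^+ 2.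
  rewrite -(sqr_sqrtr (ns_ge0 (M *m y))) ler_sqr ?nnegrE ?sqrtr_ge0 //.
  exact: le_trans (sqrtr_ge0 _) h1.
clearbody y c; rewrite hxy -scalemxAr !ns_scale hy mulr1 mulrC.
by rewrite ler_wpM2r // sqr_ge0.
Qed.

Lemma exists_unit n : (0 < n)%N -> exists x : 'cV[C]_n, ns x = 1.
Proof.
move=> hn; exists (delta_mx (Ordinal hn) ord0).
rewrite /ns (bigD1 (Ordinal hn)) //= big1 => [|i hi]; first by rewrite !mxE !eqxx /= expr1n expr0n /= mulr0n !addr0 sqrtr1 expr1n.
by rewrite /delta_mx !mxE (negbTE hi) /= /nc /= expr0n /= mulr0n addr0 sqrtr0 expr0n.
Qed.

Lemma specnorm_ge0 n (M : 'M[C]_n) : (0 < n)%N -> 0 <= specnorm M.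
Proof.
move=> hn; have [x hx] := exists_unit hn.
exact: le_trans (sqrtr_ge0 _) (specnorm_ub M hx).
Qed.

Lemma specnorm_le n (M : 'M[C]_n) b : (0 < n)%N -> 0 <= b -> opb M (b ^+ 2) ->
  specnorm M <= b.
Proof.
move=> hn b0 hM; apply: ge_sup.
  by have [x hx] := exists_unit hn; exists (vnorm (M *m x)), x => //=; apply/unit_ns.
move=> _ [x /= hx <-]; rewrite vnormE -(ger0_norm b0) -sqrtr_sqr ler_sqrt ?sqr_ge0 //.
by have := hM x; rewrite (proj1 (unit_ns x) hx) mulr1.
Qed.


Lemma scal_key (l s : R) (a b e1 e2 : C) : 0 <= l -> 0 <= s ->
  l%:C%C * b + e1 = a * s%:C%C -> l%:C%C * a + e2 = b * s%:C%C ->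
  (s - l) ^+ 2 * nc a ^+ 2 <= 2 * nc e1 ^+ 2 + 2 * nc e2 ^+ 2.
Proof.
move=> l0 s0 h1 h2.
have E1 : e1 = a * s%:C%C - l%:C%C * b by rewrite -h1 addrC addKr.
have E2 : e2 = b * s%:C%C - l%:C%C * a by rewrite -h2 addrC addKr.
have key : ((s ^+ 2 - l ^+ 2)%:C%C) * a = s%:C%C * e1 + l%:C%C * e2.
  rewrite E1 E2 rmorphB !rmorphXn /=; ring.
have h3 : `|s ^+ 2 - l ^+ 2| * nc a <= s * nc e1 + l * nc e2.
  rewrite -nc_real -ncM key; apply: le_trans (ncD _ _) _.
  by rewrite !ncM !nc_real !ger0_norm.
have fac : `|s ^+ 2 - l ^+ 2| = `|s - l| * (s + l).
  by rewrite subr_sqr normrM (ger0_norm (addr_ge0 s0 l0)).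
have a0 := nc_ge0 a; have p0 := nc_ge0 e1; have q0 := nc_ge0 e2.
have h4 : `|s - l| * nc a <= nc e1 + nc e2.
  have [sl0|slp] := eqVneq (s + l) 0.
    have s00 : s = 0 by lra.
    have l00 : l = 0 by lra.
    by rewrite s00 l00 subrr normr0 mul0r addr_ge0.
  have slp' : 0 < s + l by rewrite lt0r slp addr_ge0.
  rewrite -(ler_pM2r slp'); apply: le_trans (le_trans _ h3) _.
    by rewrite fac mulrAC.
  nra.
have h5 : (s - l) ^+ 2 * nc a ^+ 2 <= (nc e1 + nc e2) ^+ 2.
  have -> : (s - l) ^+ 2 * nc a ^+ 2 = (`|s - l| * nc a) ^+ 2.
    by rewrite exprMn real_normK ?num_real.
  by rewrite ler_sqr ?nnegrE ?addr_ge0 ?mulr_ge0.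
have := sqr_ge0 (nc e1 - nc e2); nra.
Qed.

Lemma ns_diag n (d : nat -> R) (x : 'cV[C]_n) :
  ns (rdiag n d *m x) = \sum_(t < n) d t ^+ 2 * nc (x t ord0) ^+ 2.
Proof.
rewrite /ns /rdiag mul_diag_mx; apply: eq_bigr => t _.
by rewrite !mxE ncM nc_real exprMn real_normK ?num_real.
Qed.

Lemma ns_diag_le n (d : nat -> R) (m : R) (x : 'cV[C]_n) :
  (forall t : 'I_n, `|d t| <= m) -> ns (rdiag n d *m x) <= m ^+ 2 * ns x.
Proof.
move=> hd; rewrite ns_diag /ns mulr_sumr; apply: ler_sum => t _.
rewrite ler_wpM2r ?sqr_ge0 // -real_normK ?num_real // ler_sqr ?nnegrE //.
exact: le_trans (normr_ge0 _) (hd t).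
Qed.

Lemma ns_col_unit n (W : 'M[C]_n) j : adj W *m W = 1%:M -> ns (col j W) = 1.
Proof.
move=> HW; apply: complexI; rewrite nsC.
transitivity ((adj W *m W) j j); last by rewrite HW mxE eqxx.
by rewrite !mxE; apply: eq_bigr => k _; rewrite !mxE.
Qed.

Lemma colmul m n p (A : 'M[C]_(m, n)) (B : 'M[C]_(n, p)) j :
  col j (A *m B) = A *m col j B.
Proof. by apply/matrixP => i k; rewrite !mxE; apply: eq_bigr => l _; rewrite !mxE. Qed.

Lemma col_bound n (P M Q : 'M[C]_n) b j :
  unitary P -> adj Q *m Q = 1%:M -> opb M b ->
  \sum_k nc ((adj P *m M *m Q) k j) ^+ 2 <= b.
Proof.
move=> HP HQ HM.
have -> : \sum_k nc ((adj P *m M *m Q) k j) ^+ 2 = ns (col j (adj P *m M *m Q)).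
  by apply: eq_bigr => k _; rewrite !mxE.
rewrite colmul -mulmxA ns_mulU; last by rewrite adjK.
by have := HM (col j Q); rewrite ns_col_unit // mulr1.
Qed.

Lemma row_bound n (P M Q : 'M[C]_n) b k :
  unitary Q -> adj P *m P = 1%:M -> opb (adj M) b ->
  \sum_j nc ((adj P *m M *m Q) k j) ^+ 2 <= b.
Proof.
move=> HQ HP HM.
have -> : \sum_j nc ((adj P *m M *m Q) k j) ^+ 2 =
          \sum_j nc ((adj Q *m adj M *m P) j k) ^+ 2.
  have -> : adj Q *m adj M *m P = adj (adj P *m M *m Q) by rewrite !adj_mul adjK mulmxA.
  by apply: eq_bigr => j _; rewrite /adj !mxE nc_conj.
exact: col_bound.
Qed.

End Basics.


Section Main.
Variable R : realType.
Local Notation C := R[i].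
Variables (n r : nat) (Qs H V U W : 'M[C]_n) (lam s : nat -> R).
Hypothesis HV : unitary V.
Hypothesis HU : unitary U.
Hypothesis HW : unitary W.
Hypothesis slam : sorted_spectrum n lam.
Hypothesis ss : sorted_spectrum n s.
Hypothesis hQs : Qs = V *m rdiag n lam *m adj V.
Hypothesis hQ : Qs + H = U *m rdiag n s *m adj W.
Variable eta : R.
Hypothesis eta0 : 0 <= eta.
Hypothesis hH : opb H (eta ^+ 2).

Let hHa : opb (adj H) (eta ^+ 2). Proof. exact: opb_adj (sqr_ge0 _) hH. Qed.
Let HV' := unitary_sym HV.
Let HU' := unitary_sym HU.
Let HW' := unitary_sym HW.

Let A := adj V *m U.
Let B := adj V *m W.
Let E1 := adj V *m H *m W.
Let E2 := adj V *m adj H *m U.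
Let L := rdiag n lam.
Let S := rdiag n s.

Lemma sorted_ge0 (d : nat -> R) j : sorted_spectrum n d -> 0 <= d j.
Proof.
move=> [_ [h1 h2]]; case: (ltnP j n) => hj; first exact: h1.
by rewrite h2.
Qed.

Lemma sorted_le (d : nat -> R) j k : sorted_spectrum n d -> (j <= k)%N -> d k <= d j.
Proof.
move=> [h0 [h1 h2]] hjk; case: (ltnP k n) => hk; first exact: h0.
by rewrite (h2 k hk) sorted_ge0.
Qed.

Lemma adjQs : adj Qs = Qs.
Proof. by rewrite hQs !adj_mul adjK adj_rdiag mulmxA. Qed.

Lemma eq1 : L *m B + E1 = A *m S.
Proof.
have h : (Qs + H) *m W = U *m S by rewrite hQ -!mulmxA HW' mulmx1.
have h2 : adj V *m Qs = L *m adj V by rewrite hQs !mulmxA HV' mul1mx.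
rewrite /A -mulmxA -h mulmxDl mulmxDr !mulmxA h2.
by rewrite /B /E1 ?mulmxA.
Qed.

Lemma eq2 : L *m A + E2 = B *m S.
Proof.
have hadj : Qs + adj H = W *m S *m adj U.
  by rewrite -adjQs -adjD hQ !adj_mul adjK adj_rdiag mulmxA.
have h : (Qs + adj H) *m U = W *m S by rewrite hadj -!mulmxA HU' mulmx1.
have h2 : adj V *m Qs = L *m adj V by rewrite hQs !mulmxA HV' mul1mx.
rewrite /B -mulmxA -h mulmxDl mulmxDr !mulmxA h2.
by rewrite /A /E2 ?mulmxA.
Qed.


Lemma entry1 (k j : 'I_n) : (lam k)%:C%C * B k j + E1 k j = A k j * (s j)%:C%C.
Proof.
by move: eq1 => /matrixP /(_ k j); rewrite /L /S /rdiag mul_diag_mx mul_mx_diag !mxE.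
Qed.

Lemma entry2 (k j : 'I_n) : (lam k)%:C%C * A k j + E2 k j = B k j * (s j)%:C%C.
Proof.
by move: eq2 => /matrixP /(_ k j); rewrite /L /S /rdiag mul_diag_mx mul_mx_diag !mxE.
Qed.

Lemma dkj (k j : 'I_n) :
  (s j - lam k) ^+ 2 * nc (A k j) ^+ 2 <= 2 * nc (E1 k j) ^+ 2 + 2 * nc (E2 k j) ^+ 2.
Proof.
exact: scal_key (sorted_ge0 _ slam) (sorted_ge0 _ ss) (entry1 k j) (entry2 k j).
Qed.

Lemma colsum_d (j : 'I_n) :
  \sum_(k < n) (s j - lam k) ^+ 2 * nc (A k j) ^+ 2 <= 4 * eta ^+ 2.
Proof.
have hs : \sum_(k < n) (s j - lam k) ^+ 2 * nc (A k j) ^+ 2 <=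
   \sum_(k < n) (2 * nc (E1 k j) ^+ 2 + 2 * nc (E2 k j) ^+ 2).
  by apply: ler_sum => k _; exact: dkj.
apply: le_trans hs _; rewrite big_split /= -!mulr_sumr.
have h1 : \sum_(k < n) nc (E1 k j) ^+ 2 <= eta ^+ 2 by apply: col_bound.
have h2 : \sum_(k < n) nc (E2 k j) ^+ 2 <= eta ^+ 2 by apply: col_bound.
lra.
Qed.

Lemma rowsum_d (k : 'I_n) :
  \sum_(j < n) (s j - lam k) ^+ 2 * nc (A k j) ^+ 2 <= 4 * eta ^+ 2.
Proof.
have hs : \sum_(j < n) (s j - lam k) ^+ 2 * nc (A k j) ^+ 2 <=
   \sum_(j < n) (2 * nc (E1 k j) ^+ 2 + 2 * nc (E2 k j) ^+ 2).
  by apply: ler_sum => j _; exact: dkj.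
apply: le_trans hs _; rewrite big_split /= -!mulr_sumr.
have h1 : \sum_(j < n) nc (E1 k j) ^+ 2 <= eta ^+ 2 by apply: row_bound.
have h2 : \sum_(j < n) nc (E2 k j) ^+ 2 <= eta ^+ 2 by apply: row_bound; rewrite ?adjK.
lra.
Qed.


Lemma weyl : s r ^+ 2 <= 2 * lam r ^+ 2 + 2 * eta ^+ 2.
Proof.
case: (ltnP r n) => hr1; last first.
  have [_ [_ h]] := ss; rewrite (h r hr1).
  have := sqr_ge0 (lam r); have := sqr_ge0 eta; nra.
pose wj (j : 'I_r.+1) : 'I_n := widen_ord hr1 j.
pose wk (k : 'I_r) : 'I_n := widen_ord (ltnW hr1) k.
pose M' : 'M[C]_(r.+1, r) := \matrix_(j, k) B (wk k) (wj j).
have hK : kermx M' != 0.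
  rewrite kermx_eq0 /row_free; apply/negP => /eqP h.
  by have := rank_leq_col M'; rewrite h ltnn.
have [i hi] : exists i, row i (kermx M') != 0.
  apply: contrapT => h; apply: (negP hK).
  apply/eqP/row_matrixP => i; rewrite row0.
  by case: (eqVneq (row i (kermx M')) 0) => // hi; exfalso; apply: h; exists i.
set u := row i (kermx M') in hi.
have hu : u *m M' = 0 by rewrite /u -row_mul mulmx_ker row0.
pose c : 'cV[C]_n := \col_t (\sum_(j < r.+1) (if wj j == t then u 0 j else 0)).
have c1 : forall t : 'I_n, (r < t)%N -> c t 0 = 0.
  move=> t ht; rewrite mxE big1 // => j _.
  case: eqP => // hjt; move: ht; rewrite -hjt /= ltnNge.
  by rewrite -ltnS ltn_ord.
have c2 : forall j : 'I_r.+1, c (wj j) 0 = u 0 j.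
  move=> j; rewrite mxE (bigD1 j) //= eqxx big1 ?addr0 // => j' hj'.
  case: eqP => // /(congr1 val) /= hv; case/negP: hj'; apply/eqP.
  exact: val_inj.
have cnz : ns c != 0.
  apply/negP => /eqP /ns_eq0 hc; case/negP: hi; apply/eqP/rowP => j.
  by rewrite -c2 hc !mxE.
have c4 : forall k : 'I_n, (k < r)%N -> (B *m c) k 0 = 0.
  move=> k hk; have -> : k = wk (Ordinal hk) by apply: val_inj.
  set k0 := wk (Ordinal hk).
  have e1 : (B *m c) k0 0 = \sum_(t < n) \sum_(j < r.+1)
      B k0 t * (if wj j == t then u 0 j else 0).
    rewrite [(B *m c) _ _]mxE; apply: eq_bigr => t _.
    by rewrite [c t 0]mxE mulr_sumr.
  have e3 : forall j : 'I_r.+1, \sum_(t < n) B k0 t * (if wj j == t then u 0 j else 0)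
      = u 0 j * M' j (Ordinal hk).
    move=> j; rewrite (bigD1 (wj j)) //= eqxx big1 ?addr0.
      by rewrite [M' _ _]mxE mulrC.
    by move=> t ht; rewrite eq_sym (negbTE ht) mulr0.
  rewrite e1 exchange_big /= (eq_bigr _ (fun j _ => e3 j)).
  by have := congr1 (fun M : 'M[C]_(1, r) => M 0 (Ordinal hk)) hu; rewrite [(u *m M') _ _]mxE mxE.
have hS : s r ^+ 2 * ns c <= ns (S *m c).
  rewrite /S ns_diag /ns mulr_sumr; apply: ler_sum => t _.
  case: (leqP t r) => htr; last by rewrite c1 // nc0 expr0n /= !mulr0.
  rewrite ler_wpM2r ?sqr_ge0 // ler_sqr ?nnegrE ?sorted_ge0 //.
  exact: sorted_le.
have hB : adj B *m B = 1%:M.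
  by rewrite /B adj_mul adjK mulmxA -(mulmxA (adj W)) HV mulmx1.
have hQx : ns ((Qs + H) *m (W *m c)) = ns (S *m c).
  by rewrite hQ -!mulmxA (mulmxA (adj W)) HW' mul1mx ns_mulU.
have hQsx : ns (Qs *m (W *m c)) <= lam r ^+ 2 * ns c.
  rewrite hQs -!mulmxA ns_mulU // (mulmxA (adj V)) -/B ns_diag.
  rewrite -(ns_mulU c hB) /ns mulr_sumr; apply: ler_sum => t _.
  case: (ltnP t r) => htr; first by rewrite c4 // nc0 expr0n /= !mulr0.
  rewrite ler_wpM2r ?sqr_ge0 // ler_sqr ?nnegrE ?sorted_ge0 //.
  exact: sorted_le.
have hHx : ns (H *m (W *m c)) <= eta ^+ 2 * ns c.
  by have := hH (W *m c); rewrite (ns_mulU _ HW').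
have h2 := ns_add2 (Qs *m (W *m c)) (H *m (W *m c)).
rewrite -mulmxDl hQx in h2.
have cp : 0 < ns c by rewrite lt0r cnz ns_ge0.
rewrite -(ler_pM2r cp); nra.
Qed.


Hypothesis hr : (r <= n)%N.

Lemma sum_ind (a : R) : \sum_(j < n) (if (j < r)%N then a else 0) = r%:R * a.
Proof.
rewrite -big_mkcond /= -(big_ord_widen _ (fun _ => a) hr) sumr_const card_ord.
by rewrite mulr_natl.
Qed.

Let sr := fun j : nat => if (j < r)%N then s j else 0.
Let Z := L *m A - A *m rdiag n sr.

Lemma T_ns x : ns ((Qs - trunc_r r U s) *m x) = ns (Z *m (adj A *m (adj V *m x))).
Proof.
have hVA : V *m A = U by rewrite /A mulmxA HV mul1mx.
have hAA : A *m adj A = 1%:M.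
  by rewrite /A adj_mul adjK -mulmxA (mulmxA U) HU mul1mx HV'.
have t1 : V *m (L *m A) *m adj A *m adj V = Qs.
  by rewrite hQs -[V *m (L *m A) *m adj A]mulmxA -[L *m A *m adj A]mulmxA hAA mulmx1.
have t2 : V *m (A *m rdiag n sr) *m adj A *m adj V = trunc_r r U s.
  by rewrite /trunc_r -hVA adj_mul !mulmxA.
have -> : Qs - trunc_r r U s = V *m Z *m adj A *m adj V.
  by rewrite /Z mulmxBr !mulmxBl t1 t2.
rewrite -!mulmxA ns_mulU //.
Qed.

Lemma ns_AV x : ns (adj A *m (adj V *m x)) = ns x.
Proof.
have hAA : A *m adj A = 1%:M.
  by rewrite /A adj_mul adjK -mulmxA (mulmxA U) HU mul1mx HV'.
by rewrite ns_mulU ?adjK // ns_mulU ?adjK.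
Qed.


Let bg (k : nat) := (k < r)%N && (2 * s r < lam k).
Let Z1 := \matrix_(k < n, j < n) (if (j < r)%N then (lam k - s j)%:C%C * A k j else 0).
Let Z2 := \matrix_(k < n, j < n) (if (r <= j)%N && bg k then (lam k)%:C%C * A k j else 0).
Let dd := fun k : nat => if bg k then 0 else lam k.
Let pp := fun j : nat => if (r <= j)%N then 1 else (0 : R).
Let Z3 := rdiag n dd *m A *m rdiag n pp.

Lemma Zdec : Z = Z1 + Z2 + Z3.
Proof.
apply/matrixP => k j; rewrite /Z /Z3 /Z1 /Z2 /rdiag !(mul_mx_diag, mul_diag_mx).
rewrite !mxE /sr /dd /pp.
case: (ltnP j r) => hj /=.
  rewrite rmorphB /=; ring.
case: (bg k) => /=; ring.
Qed.


Lemma frobZ1 : frob Z1 <= r%:R * (4 * eta ^+ 2).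
Proof.
rewrite /frob exchange_big /= -sum_ind; apply: ler_sum => j _.
case: ifP => hj.
  apply: le_trans (colsum_d j); apply: ler_sum => k _ /=.
  rewrite [Z1 k j]mxE hj ncM nc_real exprMn real_normK ?num_real //.
  by rewrite -sqrrN opprB.
by rewrite big1 // => k _; rewrite [Z1 k j]mxE hj nc0 expr0n.
Qed.

Lemma frobZ2 : frob Z2 <= r%:R * (16 * eta ^+ 2).
Proof.
rewrite /frob -sum_ind; apply: ler_sum => k _.
case hb : (bg k).
  have hk : (k < r)%N by move: hb => /andP [].
  have hk2 : 2 * s r < lam k by move: hb => /andP [].
  rewrite hk; apply: (@le_trans _ _ (\sum_(j < n) 4 * ((s j - lam k) ^+ 2 * nc (A k j) ^+ 2))).
    apply: ler_sum => j _; rewrite [Z2 k j]mxE hb andbT; case: ifP => hj; last first.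
      by rewrite nc0 expr0n /= mulr_ge0 // mulr_ge0 ?sqr_ge0.
    rewrite ncM nc_real exprMn real_normK ?num_real // mulrA ler_wpM2r ?sqr_ge0 //.
    have h1 := sorted_le ss hj; have h2 := sorted_ge0 j ss.
    have e0 : 0 <= lam k by lra.
    have e1 : lam k <= 2 * (lam k - s j) by lra.
    have -> : 4 * (s j - lam k) ^+ 2 = (2 * (lam k - s j)) ^+ 2 by ring.
    rewrite ler_sqr ?nnegrE //; lra.
  by rewrite -mulr_sumr; have := rowsum_d k; lra.
rewrite big1 => [|j _]; first by case: ifP => // _; rewrite mulr_ge0 // mulr_ge0 ?sqr_ge0.
by rewrite [Z2 k j]mxE hb andbF nc0 expr0n.
Qed.

Lemma nsZ3 z : ns (Z3 *m z) <= (2 * s r + lam r) ^+ 2 * ns z.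
Proof.
have hs0 := sorted_ge0 r ss; have hl0 := sorted_ge0 r slam.
rewrite /Z3 -!mulmxA; apply: le_trans (ns_diag_le (m := 2 * s r + lam r) _ _) _.
  move=> t; rewrite /dd; case: ifP => hb; first by rewrite normr0; lra.
  rewrite ger0_norm ?sorted_ge0 //; case: (ltnP t r) => ht.
    by move: hb; rewrite /bg ht /= => /negbT; rewrite -leNgt => h; lra.
  by have := sorted_le slam ht; lra.
have hVV : adj (adj V) *m adj V = 1%:M by rewrite adjK.
rewrite (ns_mulU _ hVV) (ns_mulU _ HU') ler_wpM2l ?sqr_ge0 //.
apply: le_trans (ns_diag_le (m := 1) _ _) _; last by rewrite expr1n mul1r.
by move=> t; rewrite /pp; case: ifP; rewrite ?normr1 ?normr0.
Qed.

Lemma main_bound x : ns ((Qs - trunc_r r U s) *m x) <=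
  3 * (20 * r%:R * eta ^+ 2 + (2 * s r + lam r) ^+ 2) * ns x.
Proof.
rewrite T_ns Zdec !mulmxDl -(ns_AV x).
set z := adj A *m (adj V *m x).
have h := ns_add3 (Z1 *m z) (Z2 *m z) (Z3 *m z).
have h1 := ns_frob Z1 z; have h2 := ns_frob Z2 z; have h3 := nsZ3 z.
have f1 := frobZ1; have f2 := frobZ2; have z0 := ns_ge0 z.
have g1 : ns (Z1 *m z) <= r%:R * (4 * eta ^+ 2) * ns z.
  by apply: le_trans h1 _; rewrite ler_wpM2r.
have g2 : ns (Z2 *m z) <= r%:R * (16 * eta ^+ 2) * ns z.
  by apply: le_trans h2 _; rewrite ler_wpM2r.
apply: le_trans h _; rewrite -mulrA ler_pM2l //.
set a := ns (Z1 *m z) in g1 *; set b := ns (Z2 *m z) in g2 *; set c := ns (Z3 *m z) in h3 *.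
set m2 := (2 * s r + lam r) ^+ 2 in h3 *.
set e := eta ^+ 2 in g1 g2 *; set nz := ns z in g1 g2 h3 *.
have -> : (20 * r%:R * e + m2) * nz = r%:R * (4 * e) * nz + r%:R * (16 * e) * nz + m2 * nz.
  by ring.
lra.
Qed.

End Main.


Lemma delta_le1 (R : realType) (lam : nat -> R) r : delta_star lam r <= lam r.-1.
Proof. exact: bigmin_le_id. Qed.

Lemma delta_le2 (R : realType) (lam : nat -> R) r j : (j < r.-1)%N ->
  delta_star lam r <= `|lam j - lam j.+1|.
Proof. by move=> hj; apply: (bigmin_le _ (Ordinal hj)). Qed.

Lemma lam0_ge (R : realType) n (lam : nat -> R) r : (0 < r)%N ->
  sorted_spectrum n lam -> r%:R * delta_star lam r <= lam 0%N.
Proof.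
move=> r0 sl.
have key : forall i, (i <= r.-1)%N -> (i.+1)%:R * delta_star lam r <= lam (r.-1 - i)%N.
  elim=> [|i IH] hi; first by rewrite mul1r subn0 delta_le1.
  have hi' : (i <= r.-1)%N by apply: ltnW.
  have := IH hi'; set j := (r.-1 - i.+1)%N.
  have hj : (j < r.-1)%N by rewrite /j; lia.
  have hj1 : (r.-1 - i)%N = j.+1 by rewrite /j; lia.
  rewrite hj1 => h.
  have h2 := delta_le2 lam hj.
  have h3 := sorted_le sl (leqnSn j).
  rewrite ger0_norm ?subr_ge0 // in h2.
  rewrite -natr1 mulrDl mul1r; lra.
have := key r.-1 (leqnn _); rewrite subnn prednK //.
Qed.

Theorem lemma11 :
  exists C : nat,
  forall (R : realType) (n r : nat)
    (Qs H : 'M[R[i]]_n) (lam : nat -> R) (V : 'M[R[i]]_n)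
    (U : 'M[R[i]]_n) (s : nat -> R) (W : 'M[R[i]]_n),
    (0 < r)%N -> (r <= n)%N ->
    psd_eigendecomp Qs lam V ->
    svd (Qs + H) U s W ->
    specnorm H <= delta_star lam r / 2 ->
    specnorm (Qs - trunc_r r U s)
      <= C%:R * (lam r + lam 0%N / delta_star lam r * specnorm H).
Proof.
exists 11%N => R n r Qs H lam V U s W r0 hr [HV [slam hQs]] [HU [HW [ss hQ]]] hH.
have n0 : (0 < n)%N by apply: leq_trans r0 hr.
set eta := specnorm H in hH *.
have eta0 : 0 <= eta := specnorm_ge0 H n0.
have hop : opb H (eta ^+ 2) := specnorm_opb H.
have hb := main_bound HV HU HW slam ss hQs hQ eta0 hop hr.
have hw := weyl r HV HU HW slam ss hQs hQ hop.
set d := delta_star lam r in hH *.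
set X := lam 0%N / d * eta.
have lr0 := sorted_ge0 r slam; have sr0 := sorted_ge0 r ss.
have l00 := sorted_ge0 0 slam.
have X0 : 0 <= X.
  by rewrite /X mulr_ge0 // divr_ge0 //; lra.
have hrX : r%:R * eta <= X.
  have [->|nz] := eqVneq eta 0; first by rewrite /X !mulr0.
  have etap : 0 < eta by rewrite lt0r nz.
  have dp : 0 < d by lra.
  have hl := lam0_ge r0 slam; rewrite -/d in hl.
  rewrite /X ler_wpM2r // ler_pdivlMr //.
have r1 : 1 <= r%:R :> R by rewrite ler1n.
have hrX2 : r%:R * eta ^+ 2 <= X ^+ 2.
  have ha := mulr_ge0 (ler0n R r) eta0.
  have h1 : (r%:R * eta) ^+ 2 <= X ^+ 2 by nra.
  have h2 : r%:R * eta ^+ 2 <= (r%:R * eta) ^+ 2.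
    rewrite exprMn ler_wpM2r ?sqr_ge0 // expr2 ler_peMr ?ler0n //.
  lra.
apply: specnorm_le => //.
  by rewrite mulr_ge0 ?ler0n // addr_ge0.
move=> x; apply: le_trans (hb x) _; rewrite ler_wpM2r ?ns_ge0 //.
have hm : (2 * s r + lam r) ^+ 2 <= 18 * lam r ^+ 2 + 16 * eta ^+ 2.
  have := sqr_ge0 (2 * s r - lam r); nra.
have e2 : 0 <= eta ^+ 2 := sqr_ge0 eta.
have : 20 * r%:R * eta ^+ 2 <= 20 * X ^+ 2 by lra.
rewrite -/X; nra.
Qed.
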